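(* Let $f\colon\mathbb{R}^n\to\mathbb{R}$ be continuous and suppose there is $\gamma>0$ such that (i) the set $S_\gamma=\{z\in\mathbb{R}^n : f(z)\le\inf f+\gamma\}$ is compact, and (ii) every $x\in S_\gamma$ with $0\in\partial f(x)$ is a global minimizer of $f$. Let $t\in(0,\infty)$ and let $x\in\mathbb{R}^n$ be a local minimizer of $u(\cdot,t)$. Then $x$ is a local minimizer of $f$, $u(x,t)=f(x)$, $\operatorname{prox}_{tf}(x)=\{x\}$, $u(\cdot,t)$ is differentiable at $x$, and $\nabla u(x,t)=0$.
   Context: $\operatorname{prox}_{tf}(x)=\operatorname{argmin}_{z\in\mathbb{R}^n}\big(f(z)+\frac{1}{2t}\|z-x\|^2\big)$ and $u(x,t)=\inf_{z\in\mathbb{R}^n}\big(f(z)+\frac{1}{2t}\|z-x\|^2\big)$; $\nabla u$ denotes the gradient in $x$. The subdifferential $\partial f(\bar x)$ is the set of all $v\in\mathbb{R}^n$ such that $f(x)\ge f(\bar x)+\langle v,x-\bar x\rangle+o(\|x-\bar x\|)$ as $x\to\bar x$. *)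

(* Defs.v *)
From HB Require Import structures.
From mathcomp Require Import all_boot all_order all_algebra.
From mathcomp Require Import all_classical all_reals all_analysis.
Set Implicit Arguments. Unset Strict Implicit. Unset Printing Implicit Defensive.
Import Order.TTheory GRing.Theory Num.Theory.
Import numFieldNormedType.Exports.
Local Open Scope classical_set_scope.
Local Open Scope ring_scope.

Definition dotv {R : realType} {n : nat} (v w : 'rV[R]_n) : R :=
  \sum_(i < n) v ord0 i * w ord0 i.
Definition sqnorm {R : realType} {n : nat} (v : 'rV[R]_n) : R := dotv v v.
Definition enorm {R : realType} {n : nat} (v : 'rV[R]_n) : R := Num.sqrt (sqnorm v).

Definition mobj {R : realType} {n : nat} (f : 'rV[R]_n -> R) (x : 'rV[R]_n) (t : R)
  (z : 'rV[R]_n) : R := f z + sqnorm (z - x) / (2 * t).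

(* u(x,t) = inf_z (f z + |z-x|^2/(2t)) *)
Definition moreau {R : realType} {n : nat} (f : 'rV[R]_n -> R) (x : 'rV[R]_n) (t : R) : R :=
  inf (range (mobj f x t)).

Definition prox {R : realType} {n : nat} (f : 'rV[R]_n -> R) (t : R) (x : 'rV[R]_n)
  : set 'rV[R]_n :=
  [set z | forall w, mobj f x t z <= mobj f x t w].

(* (Fréchet) subdifferential: f y >= f xb + <v, y - xb> + o(|y - xb|) *)
Definition subdiff {R : realType} {n : nat} (f : 'rV[R]_n -> R) (xb : 'rV[R]_n)
  : set 'rV[R]_n :=
  [set v | forall eps : R, 0 < eps ->
     \forall y \near xb, f xb + dotv v (y - xb) - eps * enorm (y - xb) <= f y].

Definition local_min {R : realType} {n : nat} (g : 'rV[R]_n -> R) (x : 'rV[R]_n) : Prop :=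
  \forall y \near x, g x <= g y.

Definition global_min {R : realType} {n : nat} (g : 'rV[R]_n -> R) (x : 'rV[R]_n) : Prop :=
  forall y, g x <= g y.

Definition sublev {R : realType} {n : nat} (f : 'rV[R]_n -> R) (gamma : R) : set 'rV[R]_n :=
  [set z | f z <= inf (range f) + gamma].

(* Main.v *)
Require Import Defs.
From HB Require Import structures.
From mathcomp Require Import all_boot all_order all_algebra.
From mathcomp Require Import all_classical all_reals all_analysis.
From mathcomp Require Import ring lra.
Import Order.TTheory GRing.Theory Num.Theory.
Import numFieldNormedType.Exports.
Local Open Scope classical_set_scope.
Local Open Scope ring_scope.

Section H.
Context {R : realType} {n : nat}.
Implicit Types v w : 'rV[R]_n.

Lemma sqnorm_ge0 v : 0 <= sqnorm v.
Proof. by apply: sumr_ge0 => i _; rewrite -expr2 sqr_ge0. Qed.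

Lemma sqnormZ (a : R) v : sqnorm (a *: v) = a ^+ 2 * sqnorm v.
Proof.
rewrite /sqnorm /dotv mulr_sumr; apply: eq_bigr => i _; rewrite !mxE.
by rewrite mulrACA expr2.
Qed.

Lemma sqnorm0 : sqnorm (0 : 'rV[R]_n) = 0.
Proof. by rewrite -(scale0r 0) sqnormZ expr2 !mul0r. Qed.

Lemma sqnormN v : sqnorm (- v) = sqnorm v.
Proof. by rewrite -scaleN1r sqnormZ sqrrN expr1n mul1r. Qed.

Lemma coord_le_norm v i : `|v ord0 i| <= `|v|.
Proof.
have /mapP[j Hj ->] : `|v ord0 i| \in [seq `|v x.1 x.2| | x : 'I_1 * 'I_n].
  by apply/mapP; exists (ord0, i) => //=; rewrite mem_enum.
by rewrite [leRHS]/Num.Def.normr /= mx_normrE; apply/bigmax_geP; right => /=; exists j.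
Qed.

Lemma norm_sq_le v : `|v| ^+ 2 <= sqnorm v.
Proof.
have [->|v0] := eqVneq v 0; first by rewrite normr0 expr2 mul0r sqnorm0.
have : mx_norm v != 0 by rewrite -[mx_norm v]/(`|v|) normr_eq0.
move=> /mx_norm_neq0 [[i j]] /= E.
rewrite -[`|v|]/(mx_norm v) E ord1 real_normK ?num_real //.
rewrite /sqnorm /dotv (bigD1 j) //= -expr2 lerDl.
by apply: sumr_ge0 => k _; rewrite -expr2 sqr_ge0.
Qed.

Lemma sqnorm_le v : sqnorm v <= n%:R * `|v| ^+ 2.
Proof.
rewrite /sqnorm /dotv mulr_natl -[X in _ *+ X]card_ord -sumr_const.
apply: ler_sum => i _; rewrite -expr2 -real_normK ?num_real //.
by rewrite lerXn2r ?nnegrE ?coord_le_norm.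
Qed.
End H.

Theorem lemma4 (R : realType) (n : nat) (f : 'rV[R]_n -> R) (gamma t : R)
  (x : 'rV[R]_n) :
  continuous f ->
  has_lbound (range f) ->
  0 < gamma ->
  compact (sublev f gamma) ->
  (forall z, sublev f gamma z -> subdiff f z 0 -> global_min f z) ->
  0 < t ->
  local_min (fun y => moreau f y t) x ->
  [/\ local_min f x,
      moreau f x t = f x,
      prox f t x = [set x],
      differentiable (fun y => moreau f y t) x &
      forall v, 'd (fun y => moreau f y t) x v = 0].
Proof.
move=> fc [m mlb] _ _ _ t0 lmin.
set u := fun y => moreau f y t.
have fm z : m <= f z by apply: mlb; exists z.
have t2 : 0 < 2 * t by rewrite mulr_gt0.
have qge0 (v : 'rV[R]_n) : 0 <= sqnorm v / (2 * t) by rewrite divr_ge0 ?sqnorm_ge0 ?ltW.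
have mobj_ge z y : f z <= mobj f y t z by rewrite /mobj lerDl.
have hlb y : has_lbound (range (mobj f y t)).
  by exists m => _ [z _ <-]; exact: le_trans (fm z) (mobj_ge z y).
have ne y : range (mobj f y t) !=set0 by exists (mobj f y t y); exists y.
have u_le y z : u y <= mobj f y t z by apply: ge_inf (hlb y) _ _; exists z.
have mobjxx y : mobj f y t y = f y by rewrite /mobj subrr sqnorm0 mul0r addr0.
have u_le_f y : u y <= f y by rewrite -mobjxx.
move: (lmin) => /nbhs_ballP [d /= d0 hd].
have hd' y : `|x - y| < d -> u x <= u y.
  by move=> h; apply: hd; rewrite -ball_normE.
have K z s : 0 < s -> s <= 1 -> s * `|z - x| < d ->
   u x + s * sqnorm (z - x) / (2 * t) <= mobj f x t z.
  move=> s0 s1 sd.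
  set y := x + s *: (z - x).
  have : u x <= mobj f y t z.
    apply: le_trans (u_le y z); apply: hd'.
    by rewrite /y opprD addrA subrr sub0r normrN normrZ gtr0_norm.
  rewrite /mobj.
  have -> : z - y = (1 - s) *: (z - x) by rewrite /y scalerBl scale1r opprD addrA.
  rewrite sqnormZ -!mulrA.
  have := qge0 (z - x); set k := sqnorm (z - x) / (2 * t) => k0.
  have : 0 <= k * (s * (1 - s)).
    by apply: mulr_ge0 => //; apply: mulr_ge0; [exact: ltW | rewrite subr_ge0].
  nra.
have K2 z rho : 0 < rho -> rho <= `|z - x| -> rho <= d / 2 ->
   u x + rho * rho / (2 * t) <= mobj f x t z.
  move=> rho0 rN rd.
  have N0 : 0 < `|z - x| by apply: lt_le_trans rN.
  have := K z (rho / `|z - x|) (divr_gt0 rho0 N0).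
  rewrite ler_pdivrMr // mul1r divfK ?gt_eqF // => /(_ rN).
  have -> : rho < d by apply: le_lt_trans rd _; rewrite ltr_pdivrMr // ltr_pMr // ltr1n.
  move=> /(_ isT); apply: le_trans; rewrite lerD2l; apply: ler_wpM2r; first by rewrite invr_ge0 ltW.
  apply: (le_trans (y := rho / `|z - x| * `|z - x| ^+ 2)).
    by rewrite expr2 mulrA divfK ?gt_eqF // ler_wpM2l // ltW.
  by apply: ler_wpM2l; [rewrite divr_ge0 // ltW | exact: norm_sq_le].
have uxfx : u x = f x.
  apply/eqP; rewrite eq_le u_le_f /= leNgt; apply/negP => ltux.
  set eta := f x - u x.
  have eta0 : 0 < eta by rewrite subr_gt0.
  have e20 : 0 < eta / 2 by rewrite divr_gt0.
  have := cvgr_dist_lt _ _ (fc x) _ e20.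
  move=> /(_ _) => /nbhs_ballP [r /= r0 hr].
  set rho := Order.min r (d / 2).
  have rho0 : 0 < rho by rewrite lt_min r0 divr_gt0.
  have rhor : rho <= r by rewrite ge_min lexx.
  have rhod : rho <= d / 2 by rewrite ge_min lexx orbT.
  set eps := Order.min (eta / 2) (rho * rho / (2 * t)).
  have eps0 : 0 < eps by rewrite lt_min e20 divr_gt0 // mulr_gt0.
  have eps1 : eps <= eta / 2 by rewrite ge_min lexx.
  have eps2 : eps <= rho * rho / (2 * t) by rewrite ge_min lexx orbT.
  have [_ [z _ <-] hz] := inf_adherent eps0 (conj (ne x) (hlb x)).
  have Nr : r <= `|z - x|.
    rewrite leNgt; apply/negP => zr.
    have : `|f x - f z| < eta / 2 by apply: hr; rewrite -ball_normE /= distrC.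
    move=> /(le_lt_trans (ler_norm _)) => h1.
    have := mobj_ge z x; rewrite /eta in h1 eps1; rewrite -/(u x) in hz; lra.
  have := K2 z rho rho0 (le_trans rhor Nr) rhod.
  rewrite -/(u x) in hz; lra.
have proxE : prox f t x = [set x].
  apply/seteqP; split => [z hz | z ->]; last first.
    by move=> w; rewrite mobjxx -uxfx; exact: u_le.
  apply: contraPP isT => /eqP zx _.
  have mz : mobj f x t z <= u x.
    by apply: lb_le_inf (ne x) _ => _ [w _ <-]; exact: hz.
  have N0 : 0 < `|z - x| by rewrite normr_gt0 subr_eq0.
  set rho := Order.min `|z - x| (d / 2).
  have rho0 : 0 < rho by rewrite lt_min N0 divr_gt0.
  have := K2 z rho rho0 (ltac:(by rewrite ge_min lexx)) (ltac:(by rewrite ge_min lexx orbT)).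
  have : 0 < rho * rho / (2 * t) by rewrite divr_gt0 // mulr_gt0.
  lra.
have lminf : local_min f x.
  by move: lmin; apply: filterS => y hy; rewrite -uxfx; exact: le_trans hy (u_le_f y).
have u_le2 y : u y <= u x + sqnorm (y - x) / (2 * t).
  by rewrite uxfx -opprB sqnormN; exact: u_le y x.
have hL e : 0 < e -> \forall h \near (0 : 'rV[R]_n), `|u (h + x) - u x| <= e * `|h|.
  move=> e0.
  have n1 : 0 < n%:R + 1 :> R by rewrite ltr_wpDl.
  set de := Order.min d (2 * t * e / (n%:R + 1)).
  have de0 : 0 < de by rewrite lt_min d0 divr_gt0 // mulr_gt0.
  apply/nbhs_ballP; exists de => //= h; rewrite -ball_normE /= sub0r normrN => hh.
  have hlo : u x <= u (h + x).
    apply: hd'; rewrite (addrC h x) opprD addrA subrr sub0r normrN.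
    by apply: lt_le_trans hh _; rewrite ge_min lexx.
  have hup := u_le2 (h + x); rewrite addrK in hup.
  rewrite ger0_norm ?subr_ge0 //.
  have : `|h| <= 2 * t * e / (n%:R + 1).
    by apply: le_trans (ltW hh) _; rewrite ge_min lexx orbT.
  rewrite ler_pdivlMr // => hN.
  have key : n%:R * `|h| ^+ 2 / (2 * t) <= e * `|h|.
    rewrite ler_pdivrMr //.
    have n0 : 0 <= n%:R :> R by [].
    have N0 : 0 <= `|h| by [].
    nra.
  have : sqnorm h / (2 * t) <= n%:R * `|h| ^+ 2 / (2 * t).
    by apply: ler_wpM2r; [rewrite invr_ge0 ltW | exact: sqnorm_le].
  lra.
have dE : 'd u x = 0 :> ('rV[R]_n -> R).
  apply: diff_unique; first exact: cst_continuous.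
  apply/eqaddoP => e e0; move: (hL e e0); apply: filterS => h /=.
  by rewrite !fctE /= addr0.
split => //.
  apply/diff_locallyP; split.
    by rewrite dE; exact: cst_continuous.
  rewrite dE; apply/eqaddoP => e e0; move: (hL e e0); apply: filterS => h /=.
  by rewrite !fctE /= addr0.
by move=> v; rewrite dE.
Qed.
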